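(* Let $(Q,\langle\mathsf{out},\delta\rangle)$ be a finite probabilistic automaton over a finite alphabet $A$, and let $E\subseteq A^*$ be consistent with $\varepsilon\in E$. Then the restriction map $[0,1]^{A^*}\to[0,1]^E$, $\sigma\mapsto\sigma|_E$, restricts to a bijection (an isomorphism of convex sets) from the image of $\mathsf{obs}$ onto the image of $\overline{\mathsf{row}}_E$.
   Context: A probabilistic automaton consists of a finite set of states $Q$, a transition function $\delta:Q\to\mathcal{D}(Q)^A$ and an output function $\mathsf{out}:Q\to[0,1]$, where $\mathcal{D}(Q)$ is the set of probability distributions on $Q$. Extend to $\mathcal{D}(Q)$ by $\overline{\delta}(v)(a)=\sum_{q}v(q)\,\delta(q)(a)$. Define $\mathsf{obs}:\mathcal{D}(Q)\to[0,1]^{A^*}$ by $\mathsf{obs}(v)(\varepsilon)=\sum_q v(q)\,\mathsf{out}(q)$ and $\mathsf{obs}(v)(aw)=\mathsf{obs}(\overline{\delta}(v)(a))(w)$. For $E\subseteq A^*$, $\overline{\mathsf{row}}_E:\mathcal{D}(Q)\to[0,1]^E$ is $\overline{\mathsf{row}}_E(v)(e)=\mathsf{obs}(v)(e)$; write $v_1\equiv_E v_2$ if $\overline{\mathsf{row}}_E(v_1)=\overline{\mathsf{row}}_E(v_2)$. $E$ is consistent if $v_1\equiv_E v_2$ implies $v_1\equiv_{AE}v_2$ for all $v_1,v_2\in\mathcal{D}(Q)$, where $AE=\{ae\mid a\in A,e\in E\}$. *)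

(* Defs.v *)
From mathcomp Require Import all_boot all_order all_algebra.
Set Implicit Arguments. Unset Strict Implicit. Unset Printing Implicit Defensive.
Import Order.TTheory GRing.Theory Num.Theory.
Local Open Scope ring_scope.

Section PA.
Variables (R : realFieldType) (Q A : finType).

Definition is_dist (v : {ffun Q -> R}) : Prop :=
  (forall q, 0 <= v q) /\ \sum_q v q = 1.

Definition is_PA (out : Q -> R) (delta : Q -> A -> {ffun Q -> R}) : Prop :=
  (forall q, 0 <= out q <= 1) /\ (forall q a, is_dist (delta q a)).

Definition deltabar (delta : Q -> A -> {ffun Q -> R}) (v : {ffun Q -> R}) (a : A)
  : {ffun Q -> R} := [ffun q' => \sum_q v q * delta q a q'].

Fixpoint obs (out : Q -> R) (delta : Q -> A -> {ffun Q -> R})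
   (v : {ffun Q -> R}) (w : seq A) {struct w} : R :=
  match w with
  | [::] => \sum_q v q * out q
  | a :: w' => obs out delta (deltabar delta v a) w'
  end.

(* elements of E, i.e. the index set of [0,1]^E *)
Definition word_in (E : {pred seq A}) := {e : seq A | e \in E}.

Definition rowE (out : Q -> R) (delta : Q -> A -> {ffun Q -> R})
   (E : {pred seq A}) (v : {ffun Q -> R}) : word_in E -> R :=
  fun e => obs out delta v (sval e).

Definition restrictE (E : {pred seq A}) (s : seq A -> R) : word_in E -> R :=
  fun e => s (sval e).

Definition equivE out delta (E : {pred seq A}) (v1 v2 : {ffun Q -> R}) : Prop :=
  forall e, e \in E -> obs out delta v1 e = obs out delta v2 e.

Definition consistent out delta (E : {pred seq A}) : Prop :=
  forall v1 v2, is_dist v1 -> is_dist v2 -> equivE out delta E v1 v2 ->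
    forall a e, e \in E -> obs out delta v1 (a :: e) = obs out delta v2 (a :: e).

Definition im_obs out delta (s : seq A -> R) : Prop :=
  exists2 v, is_dist v & s = obs out delta v.

End PA.
Arguments rowE {R Q A} out delta E v _.
Arguments restrictE {R A} E s _.

Definition im_rowE {R : realFieldType} {Q A : finType} (out : Q -> R)
  (delta : Q -> A -> {ffun Q -> R}) (E : {pred seq A}) (t : word_in E -> R) : Prop :=
  exists2 v, is_dist v & t = rowE out delta E v.

Arguments im_rowE {R Q A} out delta E t.

(* Main.v *)
Require Import Defs.
From mathcomp Require Import all_boot all_order all_algebra.
From Stdlib Require Import FunctionalExtensionality.
Import Order.TTheory GRing.Theory Num.Theory.
Local Open Scope ring_scope.

Lemma deltabar_dist (R : realFieldType) (Q A : finType)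
  (out : Q -> R) (delta : Q -> A -> {ffun Q -> R}) v a :
  is_PA out delta -> is_dist v -> is_dist (deltabar delta v a).
Proof.
move=> [_ Hd] [Hv0 Hv1]; split.
  move=> q'; rewrite ffunE; apply: sumr_ge0 => q _; apply: mulr_ge0 => //.
  by case: (Hd q a).
rewrite (eq_bigr (fun q' => \sum_q v q * delta q a q')); last by move=> q' _; rewrite ffunE.
rewrite exchange_big /= -Hv1; apply: eq_bigr => q _.
by rewrite -mulr_sumr; case: (Hd q a) => _ ->; rewrite mulr1.
Qed.

Theorem mainTheorem8 (R : realFieldType) (Q A : finType)
  (out : Q -> R) (delta : Q -> A -> {ffun Q -> R}) (E : {pred seq A}) :
  is_PA out delta ->
  consistent out delta E ->
  [::] \in E ->
  (* restriction is injective on the image of obs *)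
  (forall s1 s2, im_obs out delta s1 -> im_obs out delta s2 ->
     restrictE E s1 = restrictE E s2 -> s1 = s2) /\
  (* and maps the image of obs onto the image of row_E *)
  (forall t : word_in E -> R,
     im_rowE out delta E t <-> exists2 s, im_obs out delta s & restrictE E s = t).
Proof.
move=> HPA Hc HE; split.
  move=> s1 s2 [v1 Hv1 ->] [v2 Hv2 ->] Hr.
  have Heq : equivE out delta E v1 v2.
    move=> e He.
    have := congr1 (fun f => f (exist _ e He)) Hr.
    by rewrite /restrictE.
  clear Hr; apply: functional_extensionality => w.
  elim: w v1 v2 Hv1 Hv2 Heq => [|a w IH] v1 v2 Hv1 Hv2 Heq.
    exact: Heq.
  rewrite /=; apply: IH; try exact: (deltabar_dist _ _ _ _ _ _ _ HPA).
  move=> e He; exact: (Hc v1 v2 Hv1 Hv2 Heq a e He).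
move=> t; split.
  move=> [v Hv ->]; exists (obs out delta v) => //; by exists v.
by move=> [s [v Hv ->] <-]; exists v.
Qed.
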